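(* Let $\mathcal{G}=(V,\mathcal{E})$ be a strongly connected digraph with $n$ nodes and let $\tau\in\mathbb{Z}_{>0}$ be an attack duration that is nontrivial for $\mathcal{G}$, i.e. $\tau\ge D$, where $D$ is the diameter of $\mathcal{G}$, and $\tau$ is strictly smaller than the length of every closed walk in $\mathcal{G}$ that starts and ends at the same vertex and visits every vertex at least once. Then the value of the game satisfies $\mathbb{V}\le \frac{\tau}{n}$.
   Context: A Markov chain strategy conforming to $\mathcal{G}$ is a matrix $P=(p_{ij})\in\mathbb{R}^{n\times n}$ with $P\mathbb{1}_n=\mathbb{1}_n$, $p_{ij}\ge 0$ for $(i,j)\in\mathcal{E}$ and $p_{ij}=0$ for $(i,j)\notin\mathcal{E}$. For a Markov chain $(X_k)_{k\ge0}$ with transition matrix $P$, the first hitting time from $i$ to $j$ is $T_{ij}=\min\{k\ge 1: X_k=j\}$ given $X_0=i$ (so $T_{ii}$ is the first return time). The value of the game is $\mathbb{V}=\max_{P}\min_{i,j\in V}\mathbb{P}(T_{ij}(P)\le\tau)$, the maximum taken over all Markov chain strategies $P$ conforming to $\mathcal{G}$. *)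

(* Defs.v *)
From mathcomp Require Import all_boot all_order all_algebra.
Set Implicit Arguments. Unset Strict Implicit. Unset Printing Implicit Defensive.
Import Order.TTheory GRing.Theory Num.Theory.
Local Open Scope ring_scope.

Definition strongly_connected (n : nat) (E : rel 'I_n) : Prop :=
  forall i j : 'I_n, connect E i j.

Definition walk_len (n : nat) (E : rel 'I_n) (k : nat) (i j : 'I_n) : Prop :=
  exists s : seq 'I_n, [/\ path E i s, last i s = j & size s = k].

Definition diameter_le (n : nat) (E : rel 'I_n) (d : nat) : Prop :=
  forall i j : 'I_n, exists2 k, (k <= d)%N & walk_len E k i j.

(* A closed walk x, s_1, ..., s_L = x visiting every vertex; its length is L. *)
Definition closed_covering_walk (n : nat) (E : rel 'I_n) (x : 'I_n) (s : seq 'I_n) : Prop :=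
  [/\ path E x s, last x s = x & forall v : 'I_n, v \in x :: s].

Definition nontrivial_duration (n : nat) (E : rel 'I_n) (tau : nat) : Prop :=
  diameter_le E tau /\
  forall (x : 'I_n) (s : seq 'I_n), closed_covering_walk E x s -> (tau < size s)%N.

Definition conforming (R : realFieldType) (n : nat) (E : rel 'I_n) (P : 'M[R]_n) : Prop :=
  [/\ forall i : 'I_n, \sum_(j < n) P i j = 1,
      forall i j : 'I_n, E i j -> 0 <= P i j
    & forall i j : 'I_n, ~~ E i j -> P i j = 0].

(* P(T_ij <= tau) for the chain with transition matrix P started at X_0 = i:
   sum, over trajectories (X_0, ..., X_tau) with X_0 = i, of the probability
   of the trajectory, restricted to those with X_k = j for some 1 <= k <= tau. *)
Definition hit_prob (R : realFieldType) (n : nat) (P : 'M[R]_n) (i j : 'I_n) (tau : nat) : R :=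
  \sum_(y : {ffun 'I_tau.+1 -> 'I_n} |
          (y ord0 == i) && [exists k : 'I_tau.+1, (0 < k)%N && (y k == j)])
     \prod_(k < tau) P (y (inord k)) (y (inord k.+1)).

(* min_{i,j in V} P(T_ij(P) <= tau)  (probabilities are <= 1, so 1 is a neutral start). *)
Definition min_hit_prob (R : realFieldType) (n : nat) (P : 'M[R]_n) (tau : nat) : R :=
  \big[Num.min/1]_(ij : 'I_n * 'I_n) hit_prob P ij.1 ij.2 tau.

(* Main.v *)
Require Import Defs.
From mathcomp Require Import all_boot all_order all_algebra zify.
Set Implicit Arguments. Unset Strict Implicit. Unset Printing Implicit Defensive.
Import Order.TTheory GRing.Theory Num.Theory.
Local Open Scope ring_scope.

Definition wt (R : realFieldType) (n : nat) (P : 'M[R]_n) (t : nat)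
  (y : {ffun 'I_t.+1 -> 'I_n}) : R :=
  \prod_(k < t) P (y (inord k)) (y (inord k.+1)).

Definition glue (n t : nat) (p : {ffun 'I_t.+1 -> 'I_n} * 'I_n) : {ffun 'I_t.+2 -> 'I_n} :=
  [ffun k : 'I_t.+2 => if (k < t.+1)%N then p.1 (inord k) else p.2].

Definition unglue (n t : nat) (y : {ffun 'I_t.+2 -> 'I_n}) : {ffun 'I_t.+1 -> 'I_n} * 'I_n :=
  ([ffun k : 'I_t.+1 => y (inord k)], y (inord t.+1)).

Lemma glue_bij n t : bijective (@glue n t).
Proof.
exists (@unglue n t).
- case=> z a; rewrite /unglue /glue /=; congr pair.
  + apply/ffunP=> k; rewrite !ffunE inordK; last by apply: leqW; exact: ltn_ord.
    rewrite ltn_ord; congr (z _); apply/val_inj; rewrite /= inordK //.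
  + by rewrite ffunE inordK // ltnn.
- move=> y; apply/ffunP=> k; rewrite /unglue /glue !ffunE /=.
  case: ifP=> hk.
  + by congr (y _); apply/val_inj; rewrite /= !inordK //; apply: leqW.
  + congr (y _); apply/val_inj; rewrite /= inordK //.
    by have := ltn_ord k; move/negbT: hk; lia.
Qed.

Lemma glue0 n t (p : {ffun 'I_t.+1 -> 'I_n} * 'I_n) : glue p ord0 = p.1 ord0.
Proof.
by rewrite /glue ffunE /=; congr (p.1 _); apply/val_inj; rewrite /= inordK.
Qed.

Lemma wt_glue (R : realFieldType) n (P : 'M[R]_n) t (p : {ffun 'I_t.+1 -> 'I_n} * 'I_n) :
  wt P (glue p) = wt P p.1 * P (p.1 (inord t)) p.2.
Proof.
rewrite /wt big_ord_recr /=; congr (_ * _).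
  apply: eq_bigr=> k _; rewrite /glue !ffunE /=.
  have hk := ltn_ord k.
  rewrite !inordK ?ltnS //; try lia.
  rewrite ifT; last lia. rewrite ifT; last lia.
  congr (P (p.1 _) (p.1 _)); apply/val_inj; rewrite /= !inordK //; lia.
rewrite /glue !ffunE !inordK //; try lia. rewrite ltnSn ltnn.
by congr (P (p.1 _) _); apply/val_inj; rewrite /= !inordK //.
Qed.

Lemma total (R : realFieldType) (n : nat) (P : 'M[R]_n)
  (rows : forall i : 'I_n, \sum_(j < n) P i j = 1) (t : nat) (i : 'I_n) :
  \sum_(y : {ffun 'I_t.+1 -> 'I_n} | y ord0 == i) wt P y = 1.
Proof.
elim: t i => [|t IH] i.
  rewrite (big_pred1 [ffun=> i]); first by rewrite /wt big_ord0.
  move=> y /=; apply/eqP/eqP=> [<-|->]; last by rewrite ffunE.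
  by apply/ffunP=> k; rewrite ffunE (ord1 k).
rewrite (reindex (@glue n t)); last first.
  by apply: onW_bij; exact: glue_bij.
under eq_bigl do rewrite glue0.
under eq_bigr do rewrite wt_glue.
transitivity (\sum_(z : {ffun 'I_t.+1 -> 'I_n} | z ord0 == i) \sum_(a < n) wt P z * P (z (inord t)) a).
  by rewrite pair_big_dep; apply: eq_bigl => p; rewrite andbT.
rewrite -[RHS](IH i); apply: eq_bigr=> z _.
by rewrite -mulr_sumr rows mulr1.
Qed.

Lemma P_ge0 (R : realFieldType) n (E : rel 'I_n) (P : 'M[R]_n) :
  conforming E P -> forall i j, 0 <= P i j.
Proof.
case=> _ h1 h2 i j; case e: (E i j); first exact: h1.
by rewrite h2 ?e.
Qed.

Lemma wt_ge0 (R : realFieldType) n (P : 'M[R]_n) t (y : {ffun 'I_t.+1 -> 'I_n}) :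
  (forall i j, 0 <= P i j) -> 0 <= wt P y.
Proof. by move=> h; apply: prodr_ge0 => k _; apply: h. Qed.

Lemma card_hit n t (y : {ffun 'I_t.+1 -> 'I_n}) :
  (#|[pred j | [exists k : 'I_t.+1, (0 < k)%N && (y k == j)]]| <= t)%N.
Proof.
apply: leq_trans (_ : #|codom (fun k : 'I_t => y (inord k.+1))| <= t)%N.
  apply: subset_leq_card; apply/subsetP=> j /=; rewrite inE.
  case/existsP=> k /andP[k0 /eqP <-].
  have kk : (k.-1 < t)%N by have := ltn_ord k; lia.
  apply/codomP; exists (Ordinal kk); congr (y _); apply/val_inj.
  by rewrite /= prednK // inordK.
by apply: leq_trans (card_size _) _; rewrite size_codom card_ord.
Qed.

Lemma sum_hit (R : realFieldType) n (P : 'M[R]_n)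
  (rows : forall i : 'I_n, \sum_(j < n) P i j = 1) (h0 : forall i j, 0 <= P i j)
  tau (i : 'I_n) : \sum_(j < n) hit_prob P i j tau <= tau%:R.
Proof.
rewrite /hit_prob.
under eq_bigr do rewrite big_mkcondr /=.
rewrite exchange_big /=.
apply: le_trans (_ : _ <= \sum_(y : {ffun 'I_tau.+1 -> 'I_n} | y ord0 == i) tau%:R * wt P y) _.
  2: by rewrite -mulr_sumr total // mulr1.
apply: ler_sum => y _.
rewrite -big_mkcond /= sumr_const.
rewrite -/(wt P y) -[X in X <= _]mulr_natr mulrC; apply: ler_wpM2r; first exact: wt_ge0.
rewrite ler_nat; exact: card_hit.
Qed.

Theorem theorem1 (R : realFieldType) (n : nat) (E : rel 'I_n) (tau : nat)
  (n_pos : (0 < n)%N) (sc : strongly_connected E) (tau_pos : (0 < tau)%N)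
  (nt : nontrivial_duration E tau) :
  forall P : 'M[R]_n, conforming E P -> min_hit_prob P tau <= tau%:R / n%:R.
Proof.
move=> P cP; have h0 := P_ge0 cP; have [rows _ _] := cP.
have i : 'I_n by exists 0%N.
rewrite ler_pdivlMr ?ltr0n //.
apply: le_trans (sum_hit rows h0 tau i).
have -> : n%:R = \sum_(j < n) (1:R) by rewrite sumr_const card_ord.
rewrite mulr_sumr; apply: ler_sum => j _; rewrite mulr1.
exact: (bigmin_le _ (i, j)).
Qed.
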